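(* Let $\mathcal R_1,\mathcal R_2\subseteq\mathbb{N}_0^n\times\mathbb{N}_0^n$ be reaction networks on the same set of $n$ species, both without catalytic species. Then $\mathrm{cl}(\mathcal R_1)=\mathrm{cl}(\mathcal R_2)$ if and only if $\mathcal R_1(x)=\mathcal R_2(x)$ for all $x\in\mathbb{N}_0^n$.
   Context: A reaction network (RN) is a (possibly infinite) subset $\mathcal R\subseteq\mathbb{N}_0^n\times\mathbb{N}_0^n$ containing no element $(y,y')$ with $y=y'$; elements $(y,y')$ are reactions $y\to y'$. A reaction $y\to y'$ has a catalytic species if there is $i$ with $y^i>0$ and $(y')^i>0$; an RN is without catalytic species if none of its reactions has a catalytic species. For $r_1=(y_1,y_1'),\ r_2=(y_2,y_2')$ define $r_1\oplus r_2=(y_1+0\vee(y_2-y_1'),\ y_2'+0\vee(y_1'-y_2))$ ($\vee$ componentwise maximum); it is associative. For $A\subseteq\mathbb{N}_0^n\times\mathbb{N}_0^n$, $\mathrm{cl}(A)$ is the set of all finite $\oplus$-sums of elements of $A$, including the empty sum $(0,0)$. An ordered sequence of reactions $y_1\to y_1',\dots,y_m\to y_m'$ is active on $x\in\mathbb{N}_0^n$ if $x+\sum_{i=1}^{k-1}(y_i'-y_i)\ge y_k$ (componentwise) for all $k$. A state $x$ leads to $x'$ via $\mathcal R$ if there is an ordered sequence of $m\ge0$ reactions of $\mathcal R$ (repetitions allowed) active on $x$ with $x'=x+\sum_{i=1}^m(y_i'-y_i)$. $\mathcal R(x)$ denotes the set of states to which $x$ leads via $\mathcal R$. *)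

(* Defs.v *)
From mathcomp Require Import all_boot.
Set Implicit Arguments. Unset Strict Implicit. Unset Printing Implicit Defensive.

Definition state (n : nat) := {ffun 'I_n -> nat}.
Definition reaction (n : nat) := (state n * state n)%type.

Definition vzero n : state n := [ffun _ => 0].
Definition vadd n (x y : state n) : state n := [ffun i => x i + y i].
(* componentwise 0 \/ (x - y): truncated subtraction on nat *)
Definition vsub n (x y : state n) : state n := [ffun i => x i - y i].
Definition vle n (x y : state n) : Prop := forall i, x i <= y i.

Definition is_RN n (R : reaction n -> Prop) : Prop :=
  forall r, R r -> r.1 <> r.2.

Definition no_catalytic n (R : reaction n -> Prop) : Prop :=
  forall r, R r -> forall i : 'I_n, ~ (0 < r.1 i /\ 0 < r.2 i).

Definition oplus n (r1 r2 : reaction n) : reaction n :=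
  (vadd r1.1 (vsub r2.1 r1.2), vadd r2.2 (vsub r1.2 r2.1)).

Definition rzero n : reaction n := (vzero n, vzero n).

(* cl(A): all finite (+)-sums of elements of A, including the empty sum (0,0).
   By associativity the bracketing is irrelevant; we use right folding. *)
Definition cl n (A : reaction n -> Prop) : reaction n -> Prop :=
  fun r => exists s : seq (reaction n),
    (forall q, q \in s -> A q) /\ r = foldr (@oplus n) (rzero n) s.

(* An ordered sequence of reactions active on x: x + sum_{i<k}(y_i' - y_i) >= y_k
   for all k.  Since each intermediate state is >= the next reactant vector, the
   nat computation x - y + y' is exact. *)
Fixpoint active n (x : state n) (s : seq (reaction n)) : Prop :=
  match s with
  | [::] => True
  | r :: s' => vle r.1 x /\ active (vadd (vsub x r.1) r.2) s'
  end.

Fixpoint endpoint n (x : state n) (s : seq (reaction n)) : state n :=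
  match s with
  | [::] => x
  | r :: s' => endpoint (vadd (vsub x r.1) r.2) s'
  end.

Definition leads n (R : reaction n -> Prop) (x x' : state n) : Prop :=
  exists s : seq (reaction n),
    (forall q, q \in s -> R q) /\ active x s /\ x' = endpoint x s.

Definition reach n (R : reaction n -> Prop) (x : state n) : state n -> Prop :=
  leads R x.

(* Main.v *)
Require Import Defs.
From mathcomp Require Import all_boot.
From mathcomp Require Import zify.
Set Implicit Arguments.

Section S.
Variable n : nat.

Lemma pair_ext (a b : reaction n) : a.1 = b.1 -> a.2 = b.2 -> a = b.
Proof. by case: a; case: b => /= ? ? ? ? -> ->. Qed.

Lemma oplusA (a b c : reaction n) : oplus (oplus a b) c = oplus a (oplus b c).
Proof.
apply: pair_ext; apply/ffunP => i; rewrite /oplus /= /vadd /vsub !ffunE; lia.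
Qed.

Lemma oplus0 (u : reaction n) : oplus (rzero n) u = u.
Proof.
apply: pair_ext; apply/ffunP => i; rewrite /oplus /rzero /vzero /= /vadd /vsub !ffunE; lia.
Qed.

Lemma foldr_gen (s : seq (reaction n)) u :
  foldr (@oplus n) u s = oplus (foldr (@oplus n) (rzero n) s) u.
Proof.
elim: s => [|q s IH] /=; first by rewrite oplus0.
by rewrite IH oplusA.
Qed.

Lemma sumA (s : seq (reaction n)) (x : state n) :
  let t := foldr (@oplus n) (rzero n) s in
  (active x s <-> vle t.1 x) /\
  (active x s -> endpoint x s = vadd (vsub x t.1) t.2).
Proof.
elim: s x => [|q s IH] x /=.
  split; first by split => // _ i; rewrite /rzero /vzero ffunE.
  by move=> _; apply/ffunP => i; rewrite /rzero /= /vadd /vsub /vzero !ffunE; lia.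
have [IH1 IH2] := IH (vadd (vsub x q.1) q.2).
set t := foldr _ _ s in IH1 IH2 *.
split.
  split.
    move=> [H1 H2] i; move/IH1: H2 => H2; move: (H1 i) (H2 i).
    rewrite /vadd /vsub !ffunE; lia.
  move=> H; have H1 : vle q.1 x.
    by move=> i; move: (H i); rewrite /vadd /vsub !ffunE; lia.
  split => //; apply/IH1 => i; move: (H i) (H1 i); rewrite /vadd /vsub !ffunE; lia.
move=> [H1 H2]; rewrite IH2 //; move/IH1: H2 => H2.
apply/ffunP => i; move: (H1 i) (H2 i); rewrite /vadd /vsub !ffunE; lia.
Qed.

Lemma cl_oplus (R : reaction n -> Prop) a b : cl R a -> cl R b -> cl R (oplus a b).
Proof.
move=> [s1 [H1 ->]] [s2 [H2 ->]]; exists (s1 ++ s2); split.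
  by move=> q; rewrite mem_cat => /orP [] ?; [apply: H1|apply: H2].
by rewrite foldr_cat -foldr_gen.
Qed.

Lemma one_in (R1 R2 : reaction n -> Prop) :
  no_catalytic R1 ->
  (forall x x', reach R1 x x' -> reach R2 x x') ->
  forall q, R1 q -> cl R2 q.
Proof.
move=> NC H q Rq.
have : reach R1 q.1 q.2.
  exists [:: q]; split; first by move=> r; rewrite inE => /eqP ->.
  split; first by split => // i.
  by apply/ffunP => i; rewrite /= /vadd /vsub !ffunE; lia.
move/H => [s [Hs [Ha He]]].
have [A1 A2] := sumA s q.1.
set t := foldr _ _ s in A1 A2.
have Hv := proj1 A1 Ha; have E := A2 Ha; rewrite -He in E.
exists s; split => //; fold t.
have E1 : t.1 = q.1.
  apply/ffunP => i; move: (Hv i) (NC q Rq i).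
  have := congr1 (fun f : state n => f i) E; rewrite /= /vadd /vsub !ffunE => ->.
  move=> ? ?; case: (ltnP (t.1 i) (q.1 i)) => h; last lia.
  exfalso; apply: (NC q Rq i); split; lia.
apply: pair_ext => //.
by rewrite E; apply/ffunP => i; rewrite /vadd /vsub !ffunE E1 subnn add0n.
Qed.

Lemma cl_sub (R1 R2 : reaction n -> Prop) :
  no_catalytic R1 ->
  (forall x x', reach R1 x x' -> reach R2 x x') ->
  forall r, cl R1 r -> cl R2 r.
Proof.
move=> NC H r [s [Hs ->]]; elim: s Hs => [|q s IH] Hs /=.
  by exists [::].
apply: (cl_oplus (one_in NC H _ _)); first by apply: Hs; rewrite inE eqxx.
by apply: IH => p ps; apply: Hs; rewrite inE ps orbT.
Qed.

Lemma reach_sub (R1 R2 : reaction n -> Prop) :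
  (forall r, cl R1 r -> cl R2 r) ->
  forall x x', reach R1 x x' -> reach R2 x x'.
Proof.
move=> H x x' [s [Hs [Ha He]]].
have [s2 [Hs2 E]] := H _ (ex_intro _ s (conj Hs erefl)).
exists s2; split => //.
have [A1 A2] := sumA s x; have [B1 B2] := sumA s2 x.
rewrite -E in B1 B2.
have Ha2 : active x s2 by apply/B1/A1.
by split => //; rewrite He A2 // B2.
Qed.

End S.

Theorem theorem3p5 (n : nat) (R1 R2 : reaction n -> Prop) :
  is_RN R1 -> is_RN R2 -> no_catalytic R1 -> no_catalytic R2 ->
  ((forall r, cl R1 r <-> cl R2 r) <->
   (forall x : state n, forall x', reach R1 x x' <-> reach R2 x x')).
Proof.
move=> _ _ N1 N2; split.
  move=> H x x'; split; apply: reach_sub => r; by move/H.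
move=> H r; split; apply: cl_sub => // x x'; by move/H.
Qed.
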